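(* Let $N$ be a society, $\nabla$ an ES basic fusion operator with representing basic assignment $\Phi\mapsto\succeq_\Phi$, and $D$ an $N$-coalition. The following are equivalent: (i) $D$ is a decisive $N$-coalition with respect to $\nabla$; (ii) for every $N$-profile $\Phi$ and all $E,E'\in\mathcal E$ with $|[\![B(E)]\!]|\le2$, if $B(\nabla(E_i,E))\wedge B(E')\vdash\bot$ for all $i\in D$ then $B(\nabla(\Phi,E))\wedge B(E')\vdash\bot$; (iii) for every $N$-profile $\Phi$ and all interpretations $w,w'$, if $w\succ_{E_i}w'$ for all $i\in D$ then $w\succ_\Phi w'$.
   Context: Setting: epistemic space $(\mathcal E,B,\mathcal L_{\mathcal P})$ ($\mathcal E$ nonempty, $B:\mathcal E\to$ propositional formulas over finite $\mathcal P$, image modulo equivalence exactly the consistent formulas; $\mathcal W_{\mathcal P}$ valuations, $[\![\phi]\!]$ models); agents: well-ordered set $\mathcal S$; society: nonempty finite $N\subseteq\mathcal S$; $N$-profile $\Phi:N\to\mathcal E$, $E_i=\Phi(i)$, identified with $E_i$ if $N=\{i\}$; profiles on $\{i_1<\dots<i_n\}$, $\{j_1<\dots<j_m\}$ equivalent if $n=m$ and entries coincide position-wise. ES basic fusion operator: a map $\nabla(\Phi,E)\in\mathcal E$ with (ESF1) $B(\nabla(\Phi,E))\vdash B(E)$; (ESF2) equivalent profiles and $B(E)\equiv B(E')$ give equivalent $B(\nabla)$; (ESF3) if $B(E)\equiv B(E')\wedge B(E'')$ then $B(\nabla(\Phi,E'))\wedge B(E'')\vdash B(\nabla(\Phi,E))$;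 (ESF4) if moreover $B(\nabla(\Phi,E'))\wedge B(E'')\nvdash\bot$ then $B(\nabla(\Phi,E))\vdash B(\nabla(\Phi,E'))\wedge B(E'')$. Representing basic assignment: the unique $\Phi\mapsto\succeq_\Phi$ (total preorders on $\mathcal W_{\mathcal P}$, $\succ$ strict part, equal on equivalent profiles) with $[\![B(\nabla(\Phi,E))]\!]=\max([\![B(E)]\!],\succeq_\Phi)$. An $N$-coalition is a subset $D\subseteq N$; $D$ is decisive for $E$ against $E'$ if for every $N$-profile $\Phi$ with $B(\nabla(E_i,E))\wedge B(E')\vdash\bot$ for all $i\in D$ and $\bigwedge_{i\in D}B(\nabla(E_i,E))\nvdash\bot$ (empty conjunction is $\top$), we have $B(\nabla(\Phi,E))\wedge B(E')\vdash\bot$; $D$ is a decisive $N$-coalition if this holds for all $E,E'$. *)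

(* Defs.v *)
From HB Require Import structures.
From mathcomp Require Import all_boot all_order.
Set Implicit Arguments. Unset Strict Implicit. Unset Printing Implicit Defensive.
Import Order.TTheory.
Local Open Scope order_scope.

Inductive form (P : Type) : Type :=
| FVar of P | FTop | FBot | FNeg of form P
| FAnd of form P & form P | FOr of form P & form P | FImp of form P & form P.
Arguments FTop {P}. Arguments FBot {P}.

Definition valuation (P : finType) := {ffun P -> bool}.

Fixpoint sat (P : finType) (w : valuation P) (f : form P) : bool :=
  match f with
  | FVar p => w p
  | FTop => true
  | FBot => false
  | FNeg g => ~~ sat w g
  | FAnd g h => sat w g && sat w h
  | FOr g h => sat w g || sat w h
  | FImp g h => sat w g ==> sat w h
  end.

Definition models (P : finType) (f : form P) : {set valuation P} :=
  [set w | sat w f].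

Definition entails (P : finType) (f g : form P) : Prop :=
  forall w : valuation P, sat w f -> sat w g.
Definition fequiv (P : finType) (f g : form P) : Prop :=
  entails f g /\ entails g f.
Definition consistent (P : finType) (f : form P) : Prop := ~ entails f FBot.

Definition bigAnd (P : finType) (fs : seq (form P)) : form P :=
  foldr (@FAnd P) FTop fs.

Definition epistemic_space (P : finType) (E : Type) (B : E -> form P) : Prop :=
  (forall e, consistent (B e)) /\
  (forall f : form P, consistent f -> exists e, fequiv (B e) f).

(** Societies: nonempty finite subsets of the well-ordered set S of agents,
    represented as strictly increasing nonempty lists. *)
Definition society d (S : orderType d) (N : seq S) : Prop :=
  sorted <%O N /\ N <> [::].

(** A profile on society N is given by N together with Phi : S -> E
    (only the values on N matter); E_i = Phi i. *)
Definition equiv_profiles d (S : orderType d) (E : Type)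
  (N : seq S) (Phi : S -> E) (M : seq S) (Psi : S -> E) : Prop :=
  map Phi N = map Psi M.

(** ES basic fusion operator: nabla N Phi e = nabla(Phi, e) for the N-profile Phi. *)
Definition ES_basic_fusion d (S : orderType d) (P : finType) (E : Type)
  (B : E -> form P) (nabla : seq S -> (S -> E) -> E -> E) : Prop :=
  (forall N Phi e, society N -> entails (B (nabla N Phi e)) (B e)) /\
  (forall N M Phi Psi e e', society N -> society M ->
     equiv_profiles N Phi M Psi -> fequiv (B e) (B e') ->
     fequiv (B (nabla N Phi e)) (B (nabla M Psi e'))) /\
  (forall N Phi e e' e'', society N ->
     fequiv (B e) (FAnd (B e') (B e'')) ->
     entails (FAnd (B (nabla N Phi e')) (B e'')) (B (nabla N Phi e))) /\
  (forall N Phi e e' e'', society N ->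
     fequiv (B e) (FAnd (B e') (B e'')) ->
     consistent (FAnd (B (nabla N Phi e')) (B e'')) ->
     entails (B (nabla N Phi e)) (FAnd (B (nabla N Phi e')) (B e''))).

Definition total_preorder (T : Type) (R : T -> T -> Prop) : Prop :=
  (forall x, R x x) /\ (forall x y z, R x y -> R y z -> R x z) /\
  (forall x y, R x y \/ R y x).

Definition strict (T : Type) (R : T -> T -> Prop) (x y : T) : Prop :=
  R x y /\ ~ R y x.

Definition in_max (P : finType) (f : form P) (R : valuation P -> valuation P -> Prop)
  (w : valuation P) : Prop :=
  sat w f /\ forall w', sat w' f -> R w w'.

Definition representing_assignment d (S : orderType d) (P : finType) (E : Type)
  (B : E -> form P) (nabla : seq S -> (S -> E) -> E -> E)
  (pre : seq S -> (S -> E) -> valuation P -> valuation P -> Prop) : Prop :=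
  (forall N Phi, society N -> total_preorder (pre N Phi)) /\
  (forall N M Phi Psi, society N -> society M ->
     equiv_profiles N Phi M Psi -> pre N Phi = pre M Psi) /\
  (forall N Phi e, society N ->
     forall w, sat w (B (nabla N Phi e)) <-> in_max (B e) (pre N Phi) w).

Definition coalition d (S : orderType d) (N D : seq S) : Prop := {subset D <= N}.

Definition decisive_for d (S : orderType d) (P : finType) (E : Type)
  (B : E -> form P) (nabla : seq S -> (S -> E) -> E -> E)
  (N D : seq S) (e e' : E) : Prop :=
  forall Phi : S -> E,
    (forall i, i \in D -> entails (FAnd (B (nabla [:: i] Phi e)) (B e')) FBot) ->
    consistent (bigAnd [seq B (nabla [:: i] Phi e) | i <- D]) ->
    entails (FAnd (B (nabla N Phi e)) (B e')) FBot.

Definition decisive d (S : orderType d) (P : finType) (E : Type)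
  (B : E -> form P) (nabla : seq S -> (S -> E) -> E -> E) (N D : seq S) : Prop :=
  forall e e' : E, decisive_for B nabla N D e e'.

(* Main.v *)
Require Import Defs.
From HB Require Import structures.
From mathcomp Require Import all_boot all_order.
From Stdlib Require Import Classical.
Import Order.TTheory.
Set Implicit Arguments. Unset Strict Implicit.

Lemma sat_bigAnd (P : finType) (w : valuation P) (fs : seq (form P)) :
  sat w (bigAnd fs) = all (sat w) fs.
Proof. by elim: fs => //= f fs ->. Qed.

Definition charf (P : finType) (w : valuation P) : form P :=
  bigAnd [seq (if w p then FVar p else FNeg (FVar p)) | p <- enum P].

Lemma sat_charf (P : finType) (w v : valuation P) : sat v (charf w) = (v == w).
Proof.
rewrite /charf sat_bigAnd all_map.
apply/allP/eqP => [H|->].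
- apply/ffunP => p; have := H p (mem_enum _ p).
  by case E: (w p) => /=; rewrite E // => /negbTE.
- by move=> p _ /=; case E: (w p) => /=; rewrite E.
Qed.

Lemma get_e (P : finType) (E : Type) (B : E -> form P) (f : form P) (w0 : valuation P) :
  epistemic_space B -> sat w0 f -> exists e, forall v, sat v (B e) = sat v f.
Proof.
move=> [_ H] Hw. have [e [H1 H2]] : exists e, fequiv (B e) f.
  by apply: H => Hc; have := Hc w0 Hw.
exists e => v; apply/idP/idP; [exact: H1|exact: H2].
Qed.

Lemma sat_and (P : finType) (w : valuation P) (f g : form P) :
  sat w (FAnd f g) = sat w f && sat w g.
Proof. by []. Qed.

Lemma nosat (P : finType) (w : valuation P) (f g : form P) :
  entails (FAnd f g) FBot -> sat w f -> sat w g -> False.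
Proof. by move=> H Hf Hg; have := H w; rewrite /= Hf Hg => /(_ isT). Qed.

Section Main.
Variables (d : Order.disp_t) (S : orderType d) (P : finType) (E : Type)
  (B : E -> form P) (nabla : seq S -> (S -> E) -> E -> E)
  (pre : seq S -> (S -> E) -> valuation P -> valuation P -> Prop)
  (N D : seq S).
Hypotheses (Hes : epistemic_space B) (Hrep : representing_assignment B nabla pre)
  (HN : society N).

Lemma soc1 (i : S) : society [:: i].
Proof. by split. Qed.

Lemma getsat (e : E) : exists w, sat w (B e).
Proof.
case: Hes => H _; apply: NNPP => Hn; apply: (H e) => w Hw.
by exfalso; apply: Hn; exists w.
Qed.

Lemma maxI (M : seq S) Phi e w : society M ->
  sat w (B (nabla M Phi e)) <-> in_max (B e) (pre M Phi) w.
Proof. by case: Hrep => _ [_ H] HM; apply: H. Qed.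

Lemma preI (M : seq S) Phi : society M -> total_preorder (pre M Phi).
Proof. by case: Hrep => H _ HM; apply: H. Qed.

Lemma stepC :
  (forall (Phi : S -> E) (w w' : valuation P),
        (forall i, i \in D -> strict (pre [:: i] Phi) w w') ->
        strict (pre N Phi) w w') -> decisive B nabla N D.
Proof.
move=> H3 e e' Phi Hi Hcons v; rewrite sat_and => /andP [Hv Hv']; exfalso.
have [HvB Hvmax] := (maxI Phi e v HN).1 Hv.
case: D H3 Hi Hcons => [|i0 D'] H3 Hi Hcons.
  by have [a b] := H3 Phi v v (fun i (Hi : i \in [::]) => False_ind _ (notF Hi)).
have [w0 Hw0] : exists w0, sat w0 (bigAnd [seq B (nabla [:: i] Phi e) | i <- i0 :: D']).
  by apply: NNPP => Hn; apply: Hcons => w Hw; exfalso; apply: Hn; exists w.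
rewrite sat_bigAnd all_map in Hw0.
have Hw0i : forall i, i \in i0 :: D' -> in_max (B e) (pre [:: i] Phi) w0.
  move=> i Hi'; apply/(maxI _ _ _ (soc1 i)); exact: (allP Hw0 i Hi').
have Hs : forall i, i \in i0 :: D' -> strict (pre [:: i] Phi) w0 v.
  move=> i Hi'; have [Hw0e Hw0m] := Hw0i i Hi'; split; first exact: Hw0m.
  move=> Hvw; have [_ [Htr _]] := preI Phi (soc1 i).
  have : sat v (B (nabla [:: i] Phi e)).
    apply/(maxI _ _ _ (soc1 i)); split => // w'' Hw''.
    exact: Htr _ _ _ Hvw (Hw0m _ Hw'').
  by move=> Hvn; exact: (nosat (Hi i Hi') Hvn Hv').
have [_ Hn] := H3 Phi w0 v Hs; apply: Hn; apply: Hvmax.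
by have [] := Hw0i i0 (mem_head _ _).
Qed.

Lemma stepB :
  (forall (Phi : S -> E) (e e' : E), #|models (B e)| <= 2 ->
        (forall i, i \in D -> entails (FAnd (B (nabla [:: i] Phi e)) (B e')) FBot) ->
        entails (FAnd (B (nabla N Phi e)) (B e')) FBot) ->
  (forall (Phi : S -> E) (w w' : valuation P),
        (forall i, i \in D -> strict (pre [:: i] Phi) w w') ->
        strict (pre N Phi) w w').
Proof.
move=> H2 Phi w w' Hs.
have [e He] : exists e, forall v, sat v (B e) = sat v (FOr (charf w) (charf w')).
  by apply: (@get_e _ _ B _ w Hes); rewrite /= sat_charf eqxx.
have [e' He'] : exists e, forall v, sat v (B e) = sat v (charf w').
  by apply: (@get_e _ _ B _ w' Hes); rewrite sat_charf eqxx.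
have Hcard : #|models (B e)| <= 2.
  apply: leq_trans (_ : #|[set w; w']| <= 2); last by rewrite cards2; case: (w != w').
  apply: subset_leq_card; apply/subsetP => v; rewrite !inE He /= !sat_charf.
  by [].
have H := H2 Phi e e' Hcard.
have [Hrefl [Htr Htot]] := preI Phi HN.
have Hpre : forall i, i \in D -> entails (FAnd (B (nabla [:: i] Phi e)) (B e')) FBot.
  move=> i Hi v; rewrite sat_and => /andP [Hv Hv']; exfalso.
  have [_ Hm] := (maxI _ _ _ (soc1 i)).1 Hv.
  rewrite He' sat_charf in Hv'; move/eqP: Hv' => Hv'; subst v.
  have [_ Hn] := Hs i Hi; apply: Hn; apply: Hm.
  by rewrite He /= !sat_charf eqxx.
have Hent := H Hpre.
have Hnot : ~ pre N Phi w' w.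
  move=> Hw'w; apply: (nosat (w:=w') Hent); last by rewrite He' sat_charf eqxx.
  apply/(maxI _ _ _ HN); split; first by rewrite He /= !sat_charf eqxx orbT.
  move=> w''; rewrite He /= !sat_charf => /orP [] /eqP ->; [exact: Hw'w|exact: Hrefl].
split => //; by case: (Htot w w') => // /Hnot.
Qed.

Lemma card3 (A : {set valuation P}) a b c :
  a \in A -> b \in A -> c \in A -> a != b -> a != c -> b != c -> 2 < #|A|.
Proof.
move=> Ha Hb Hc ab ac bc.
apply: leq_trans (_ : #|a |: [set b; c]| <= #|A|).
  by rewrite cardsU1 cards2 !inE negb_or ab ac bc.
by apply: subset_leq_card; apply/subsetP => x; rewrite !inE => /orP [/eqP->|/orP [] /eqP ->].
Qed.

Lemma stepA : decisive B nabla N D ->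
  (forall (Phi : S -> E) (e e' : E), #|models (B e)| <= 2 ->
        (forall i, i \in D -> entails (FAnd (B (nabla [:: i] Phi e)) (B e')) FBot) ->
        entails (FAnd (B (nabla N Phi e)) (B e')) FBot).
Proof.
move=> Hdec Phi e e' Hcard Hi.
case: (classic (consistent (bigAnd [seq B (nabla [:: i] Phi e) | i <- D]))) => Hc.
  exact: Hdec.
have HX := NNPP _ Hc.
move=> v; rewrite sat_and => /andP [Hv Hv']; exfalso.
have [HvB _] := (maxI _ _ _ HN).1 Hv.
have inM : forall x, sat x (B e) -> x \in models (B e) by move=> x Hx; rewrite inE.
case: D Hdec Hi HX => [|i0 D'] Hdec Hi HX; first by have := HX v isT.
have [u Hu] := getsat (nabla [:: i0] Phi e).
have [HuB _] := (maxI _ _ _ (soc1 i0)).1 Hu.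
have Huv : u != v.
  by apply/eqP => Heq; subst u; exact: (nosat (Hi i0 (mem_head _ _)) Hu Hv').
have : sat u (bigAnd [seq B (nabla [:: i] Phi e) | i <- i0 :: D']).
  rewrite sat_bigAnd all_map; apply/allP => i Hi'.
  have [ui Hui] := getsat (nabla [:: i] Phi e).
  have [HuiB _] := (maxI _ _ _ (soc1 i)).1 Hui.
  have Huiv : ui != v.
    by apply/eqP => Heq; subst ui; exact: (nosat (Hi i Hi') Hui Hv').
  case: (eqVneq ui u) => [<-|neq] //.
  have := card3 (inM _ HuiB) (inM _ HuB) (inM _ HvB) neq Huiv Huv.
  by rewrite ltnNge Hcard.
by move/HX.
Qed.

End Main.

Theorem mainTheorem15 (d : Order.disp_t) (S : orderType d) (P : finType) (E : Type)
  (B : E -> form P) (nabla : seq S -> (S -> E) -> E -> E)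
  (pre : seq S -> (S -> E) -> valuation P -> valuation P -> Prop)
  (N D : seq S) :
  well_founded (fun x y : S => (x < y)%O) ->
  epistemic_space B ->
  ES_basic_fusion B nabla ->
  representing_assignment B nabla pre ->
  society N ->
  coalition N D ->
  (decisive B nabla N D <->
     (forall (Phi : S -> E) (e e' : E), #|models (B e)| <= 2 ->
        (forall i, i \in D -> entails (FAnd (B (nabla [:: i] Phi e)) (B e')) FBot) ->
        entails (FAnd (B (nabla N Phi e)) (B e')) FBot)) /\
  (decisive B nabla N D <->
     (forall (Phi : S -> E) (w w' : valuation P),
        (forall i, i \in D -> strict (pre [:: i] Phi) w w') ->
        strict (pre N Phi) w w')).
Proof.
move=> _ Hes _ Hrep HN _.
split; split.
- exact: (stepA Hes Hrep HN).
- by move=> H; apply: (stepC Hrep HN); apply: (stepB Hes Hrep HN).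
- by move=> H; apply: (stepB Hes Hrep HN); apply: (stepA Hes Hrep HN).
- exact: (stepC Hrep HN).
Qed.
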